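(* (1) Every generic length vector of length $n$ is equivalent to a generic length vector $(\ell_1,\ldots,\ell_n)$ whose entries are positive integers with $\ell_1\le\cdots\le\ell_n$ and $$\ell_n+\ell_{n-1}\le\ell_1+\cdots+\ell_{n-2}+1.$$ (2) If $\ell=(\ell_1,\ldots,\ell_n)$ is such a vector (generic, positive integer entries, nondecreasing, satisfying the displayed inequality), let $|\ell|=\ell_1+\cdots+\ell_n$ and define the length-$(n+1)$ vector $$\ell'=\Big(\ell_1,\ldots,\ell_{n-1},\tfrac{|\ell|+1}{2}-\ell_n,\tfrac{|\ell|+1}{2}\Big).$$ Then $\ell$ and $\ell'$ have the same gees.
   Context: A length vector is $\ell=(\ell_1,\ldots,\ell_n)$ of positive reals with $\ell_1\le\cdots\le\ell_n$ and $\ell_n<\ell_1+\cdots+\ell_{n-1}$; it is generic if no $S\subset\{1,\ldots,n\}$ has $\sum_{i\in S}\ell_i=\sum_{i\notin S}\ell_i$. $S$ is short if $\sum_{i\in S}\ell_i<\sum_{i\notin S}\ell_i$. Partially order subsets by $\{s_1,\ldots,s_p\}\le T$ if $T$ contains distinct elements $t_1,\ldots,t_p$ with $s_i\le t_i$. The genetic code of $\ell$ is the set of maximal elements (genes) among short subsets containing $n$; the gees are the genes with $n$ removed. Two length vectors are equivalent if they have the same genetic code (equivalently, homeomorphic polygon spaces $\overline{M}(\ell)=\{(z_i)\in(S^1)^n:\sum\ell_iz_i=0\}/O(2)$). *)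

(* Defs.v *)
From HB Require Import structures.
From mathcomp Require Import all_boot all_order all_algebra.
From mathcomp Require Import reals.
Set Implicit Arguments. Unset Strict Implicit. Unset Printing Implicit Defensive.
Import Order.TTheory GRing.Theory Num.Theory.
Local Open Scope ring_scope.

Section LengthVectors.
Variable R : realType.
Variable n : nat.
(* A vector of length n is l : 'I_n -> R ; index i : 'I_n corresponds to the
   paper's index i+1, so the paper's index n is the ordinal with value n.-1. *)
Implicit Types (l : 'I_n -> R) (S T : {set 'I_n}).

Definition sumS l S : R := \sum_(i in S) l i.

Definition is_top (i : 'I_n) : bool := val i == n.-1.

Definition is_length_vector l : Prop :=
  (forall i, 0 < l i) /\
  (forall i j : 'I_n, (i <= j)%N -> l i <= l j) /\
  (forall i : 'I_n, is_top i -> l i < \sum_(j | j != i) l j).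

Definition generic l : Prop := forall S, sumS l S != sumS l (~: S).

Definition short l S : Prop := sumS l S < sumS l (~: S).

Definition subset_le S T : Prop :=
  exists f : 'I_n -> 'I_n,
    {in S &, injective f} /\ (forall s, s \in S -> (s <= f s)%N /\ f s \in T).

Definition contains_top S : Prop := exists2 i, i \in S & is_top i.

Definition gene l S : Prop :=
  [/\ short l S, contains_top S &
      forall T, short l T -> contains_top T -> subset_le S T -> T = S].

Definition equivalent (l1 l2 : 'I_n -> R) : Prop :=
  forall S, gene l1 S <-> gene l2 S.

(* gees: genes with n removed, viewed as sets of (0-based) natural indices,
   so that gees of vectors of different lengths can be compared *)
Definition gee l (A : pred nat) : Prop :=
  exists2 G, gene l G &
    forall k : nat, A k = [exists i in G, (val i == k) && ~~ is_top i].

Definition integer_entries l : Prop := exists m : 'I_n -> nat, forall i, l i = (m i)%:R.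

Definition top_ineq l : Prop :=
  \sum_(i : 'I_n | (n.-2 <= i)%N) l i <= \sum_(i : 'I_n | (i < n.-2)%N) l i + 1.

(* l' = (l_1,...,l_{n-1}, (|l|+1)/2 - l_n, (|l|+1)/2), a vector of length n+1 *)
Definition ext_vec l (i : 'I_n.+1) : R :=
  let h := (\sum_j l j + 1) / 2 in
  let ln := match @insub nat (fun k => (k < n)%N) _ n.-1 with
            | Some j => l j | None => 0 end in
  if val i == n then h
  else if val i == n.-1 then h - ln
  else match @insub nat (fun k => (k < n)%N) _ (val i) with
       | Some j => l j | None => 0 end.

End LengthVectors.

(* Main.v *)
Require Import Defs.
From HB Require Import structures.
From mathcomp Require Import all_boot all_order all_algebra.
From mathcomp Require Import reals.
From mathcomp Require Import zify ring lra.
Set Implicit Arguments. Unset Strict Implicit. Unset Printing Implicit Defensive.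
Import Order.TTheory GRing.Theory Num.Theory.
Local Open Scope ring_scope.

Section General.
Variable R : realType.

Lemma sumSC n (l : 'I_n -> R) S : sumS l S + sumS l (~: S) = \sum_i l i.
Proof.
rewrite /sumS [RHS](bigID (fun i => i \in S)) /=; congr (_ + _).
by apply: eq_bigl => i; rewrite inE.
Qed.

Lemma shortE n (l : 'I_n -> R) S : short l S <-> 2 * sumS l S < \sum_i l i.
Proof.
rewrite /short -(sumSC l S); split => H; lra.
Qed.

Lemma equiv_of_short n (l1 l2 : 'I_n -> R) :
  (forall S, contains_top S -> (short l1 S <-> short l2 S)) -> equivalent l1 l2.
Proof.
move=> H S; split => -[sh ct mx]; split => //.
- by apply/H.
- by move=> T shT ctT le; apply: mx => //; apply/H.
- by apply/H.
- by move=> T shT ctT le; apply: mx => //; apply/H.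
Qed.

Section Transport.
Variables (n1 n2 : nat) (l1 : 'I_n1 -> R) (l2 : 'I_n2 -> R).
Variables (e : 'I_n1 -> 'I_n2) (g : 'I_n2 -> 'I_n1).
Hypothesis H1 : forall i j, (e i <= e j)%N = (i <= j)%N.
Hypothesis H2 : cancel e g.
Hypothesis H3 : forall i, is_top (e i) = is_top i.
Hypothesis H4 : forall S, contains_top S -> (short l1 S <-> short l2 (e @: S)).
Hypothesis H5 : forall T, contains_top T -> short l2 T -> forall x, x \in T -> e (g x) = x.
Hypothesis H6 : forall i, ~~ is_top i -> val (e i) = val i.

Let einj : injective e := can_inj H2.

Lemma ct_e (S : {set 'I_n1}) : contains_top (e @: S) <-> contains_top S.
Proof.
split.
- by case=> x /imsetP [i iS ->]; rewrite H3 => ti; exists i.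
- by case=> i iS ti; exists (e i); [apply: imset_f | rewrite H3].
Qed.

Lemma T_eg (T : {set 'I_n2}) : (forall x, x \in T -> e (g x) = x) -> T = e @: (g @: T).
Proof.
move=> HT; apply/setP => x; apply/idP/idP.
- by move=> xT; rewrite -(HT x xT); apply: imset_f; apply: imset_f.
- by case/imsetP => y /imsetP [x' x'T ->] ->; rewrite HT.
Qed.

Lemma le_e (S T : {set 'I_n1}) : subset_le S T <-> subset_le (e @: S) (e @: T).
Proof.
split.
- case=> f [finj fle]; exists (fun x => e (f (g x))); split.
  + move=> x y /imsetP [u uS ->] /imsetP [v vS ->]; rewrite !H2 => /einj /finj.
    by move=> /(_ uS vS) ->.
  + move=> x /imsetP [u uS ->]; rewrite H2 H1; have [h1 h2] := fle u uS.
    by split => //; apply: imset_f.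
- case=> f [finj fle]; exists (fun u => g (f (e u))).
  have key : forall u, u \in S -> exists2 w, w \in T & f (e u) = e w.
    move=> u uS; have [_ /imsetP [w wT ->]] := fle (e u) (imset_f _ uS).
    by exists w.
  split.
  + move=> u v uS vS; have [w wT ew] := key u uS; have [w' w'T ew'] := key v vS.
    rewrite ew ew' !H2 => eww; move: ew; rewrite eww -ew' => /finj.
    by move=> /(_ (imset_f _ uS) (imset_f _ vS)) /einj.
  + move=> u uS; have [w wT ew] := key u uS; rewrite ew H2; split => //.
    by have [+ _] := fle (e u) (imset_f _ uS); rewrite ew H1.
Qed.

Lemma gene_e (S : {set 'I_n1}) : gene l1 S <-> gene l2 (e @: S).
Proof.
split.
- case=> sh ct mx; split.
  + by apply/H4.
  + by apply/ct_e.
  + move=> T shT ctT leT.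
    have HT := T_eg (H5 ctT shT); rewrite HT in shT ctT leT *.
    move/ct_e: ctT => ctT.
    by rewrite (mx _ ((H4 ctT).2 shT) ctT (proj2 (le_e _ _) leT)).
- case=> sh /ct_e ct mx; split.
  + by apply/H4.
  + by [].
  + move=> T shT ctT leT; apply: (imset_inj einj); apply: mx.
    * by apply/H4.
    * by apply/ct_e.
    * by apply/le_e.
Qed.

Lemma gee_e (A : pred nat) : gee l1 A <-> gee l2 A.
Proof.
have exE : forall (G : {set 'I_n1}) (k : nat), [exists i in G, (val i == k) && ~~ is_top i] =
    [exists i in e @: G, (val i == k) && ~~ is_top i].
  move=> G k; apply/existsP/existsP.
  - case=> i /andP [iG /andP [ik ti]]; exists (e i).
    by rewrite imset_f //= H3 ti H6 // andbT.
  - case=> x /andP [/imsetP [i iG ->] /andP [ik]]; rewrite H3 => ti.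
    by exists i; rewrite iG ti -(H6 ti) ik.
split.
- case=> G /gene_e gG HA; exists (e @: G) => // k; by rewrite HA exE.
- case=> G gG HA.
  have HG : G = e @: (g @: G).
    by case: gG => sh ct _; exact: T_eg (H5 ct sh).
  rewrite HG in gG HA; exists (g @: G); first by apply/gene_e.
  by move=> k; rewrite HA exE.
Qed.

End Transport.
End General.

Module P1.
Section Part1.
Variables (R : realType) (m : nat) (l : 'I_m.+2 -> R).
Hypothesis Hl : is_length_vector l.
Hypothesis Hg : generic l.

Let t : 'I_m.+2 := ord_max.
Let s : 'I_m.+2 := inord m.

Lemma val_s : val s = m.
Proof. exact: inordK. Qed.

Lemma predlt (j : 'I_m.+2) : ((j != t) && (j != s)) = (j < m)%N.
Proof.
rewrite -!val_eqE val_s /=; case: j => k hk /=.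
by apply/idP/idP => [/andP [/eqP ? /eqP ?]|?]; [lia | apply/andP; split; apply/eqP; lia].
Qed.

Lemma s_ne_t : s != t.
Proof. by rewrite -val_eqE val_s /=; lia. Qed.

Lemma decR (F : 'I_m.+2 -> R) :
  \sum_i F i = F t + (F s + \sum_(j : 'I_m.+2 | (j < m)%N) F j).
Proof.
rewrite (bigD1 t) //= (bigD1 s) ?s_ne_t //=; congr (_ + (_ + _)).
by apply: eq_bigl => j; rewrite predlt.
Qed.

Lemma decN (F : 'I_m.+2 -> nat) :
  (\sum_i F i = F t + (F s + \sum_(j : 'I_m.+2 | (j < m)%N) F j))%N.
Proof.
rewrite (bigD1 t) //= (bigD1 s) ?s_ne_t //=; congr (_ + (_ + _))%N.
by apply: eq_bigl => j; rewrite predlt.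
Qed.

Lemma decN' (F : 'I_m.+2 -> nat) :
  (\sum_(i | i != t) F i = F s + \sum_(j : 'I_m.+2 | (j < m)%N) F j)%N.
Proof.
rewrite (bigD1 s) ?s_ne_t //=; congr (_ + _)%N.
by apply: eq_bigl => j; rewrite -predlt andbC.
Qed.

Lemma le_s (j : 'I_m.+2) : j != t -> (j <= s)%N.
Proof. move=> jt; have vs : nat_of_ord s = m := val_s; case: j jt => k hk; rewrite -val_eqE /= => /eqP ne; rewrite vs; lia. Qed.

Lemma lpos i : 0 < l i. Proof. by case: Hl. Qed.
Lemma lmono (i j : 'I_m.+2) : (i <= j)%N -> l i <= l j. Proof. by case: Hl => _ [H _]; apply: H. Qed.

Let Sig := \sum_i l i.

Lemma sumD1 (F : 'I_m.+2 -> R) (S : {set 'I_m.+2}) : t \in S ->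
  \sum_(i in S) F i = F t + \sum_(i in S :\ t) F i.
Proof. by move=> tS; rewrite (big_setD1 t). Qed.

Lemma sumD1N (F : 'I_m.+2 -> nat) (S : {set 'I_m.+2}) : t \in S ->
  (\sum_(i in S) F i = F t + \sum_(i in S :\ t) F i)%N.
Proof. by move=> tS; rewrite (big_setD1 t). Qed.

Lemma termN (F : 'I_m.+2 -> nat) (A : {set 'I_m.+2}) i : i \in A ->
  (F i <= \sum_(j in A) F j)%N.
Proof. by move=> iA; rewrite (big_setD1 i) //= leq_addr. Qed.

Definition dist (S : {set 'I_m.+2}) := `|Sig - 2 * sumS l S|.
Definition delta := \big[Order.min/1]_(S : {set 'I_m.+2}) dist S.

Lemma delta_gt0 : 0 < delta.
Proof.
apply: lt_bigmin => // S _; rewrite /dist normr_gt0 /Sig -(sumSC l S).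
have := Hg S; apply: contra => /eqP H; apply/eqP; lra.
Qed.

Lemma delta_le (S : {set 'I_m.+2}) : delta <= dist S.
Proof. exact: bigmin_le. Qed.

Lemma gap (S : {set 'I_m.+2}) : short l S -> delta <= Sig - 2 * sumS l S.
Proof.
move=> /shortE sh; have := delta_le S; rewrite /dist ger0_norm //; rewrite /Sig; lra.
Qed.

Lemma gap' (S : {set 'I_m.+2}) : ~ short l S -> delta <= 2 * sumS l S - Sig.
Proof.
move=> nsh; have lt : sumS l (~: S) < sumS l S.
  rewrite lt_neqAle eq_sym Hg /= leNgt; exact/negP.
have := delta_le S; rewrite /dist ler0_norm; last first.
  by rewrite /Sig -(sumSC l S); lra.
by rewrite /Sig -(sumSC l S); lra.
Qed.

Definition K : nat := Num.Def.archi_bound ((2 * m.+2 + 1)%:R / delta).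

Lemma K_big : (2 * m.+2 + 1)%:R < K%:R * delta.
Proof.
have := @archi_boundP R ((2 * m.+2 + 1)%:R / delta).
rewrite -/K ltr_pdivrMr ?delta_gt0 //; apply.
by apply: divr_ge0 => //; apply: ltW; apply: delta_gt0.
Qed.

Definition p i := (Num.truncn (K%:R * l i)).+1.

Lemma K_ge0 : 0 <= K%:R :> R. Proof. by []. Qed.

Lemma p_bnd i : K%:R * l i < (p i)%:R /\ (p i)%:R <= K%:R * l i + 1.
Proof.
have h0 : 0 <= K%:R * l i by apply: mulr_ge0 => //; apply: ltW; apply: lpos.
have := truncn_itv h0; rewrite /p => /andP [h1 h2]; split => //.
by rewrite -addn1 natrD lerD2r.
Qed.

Lemma p_mono (i j : 'I_m.+2) : (i <= j)%N -> (p i <= p j)%N.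
Proof.
move=> ij; rewrite /p ltnS; apply: le_truncn; apply: ler_wpM2l => //.
exact: lmono.
Qed.

Lemma p_ge1 i : (1 <= p i)%N. Proof. by []. Qed.

Lemma psum_lo (P : pred 'I_m.+2) :
  K%:R * \sum_(i | P i) l i <= (\sum_(i | P i) p i)%:R.
Proof.
rewrite natr_sum mulr_sumr; apply: ler_sum => i _; apply: ltW; exact: (p_bnd i).1.
Qed.

Lemma psum_hi (P : pred 'I_m.+2) :
  (\sum_(i | P i) p i)%:R <= K%:R * \sum_(i | P i) l i + m.+2%:R.
Proof.
rewrite natr_sum mulr_sumr.
apply: le_trans (_ : \sum_(i | P i) (K%:R * l i + 1) <= _).
  by apply: ler_sum => i _; exact: (p_bnd i).2.
rewrite big_split /= lerD2l.
have -> : \sum_(i | P i) (1 : R) = (\sum_(i | P i) 1%N)%:R by rewrite natr_sum.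
rewrite ler_nat; apply: leq_trans (_ : \sum_(i : 'I_m.+2) 1 <= _)%N.
  by apply: (@sub_le_big _ addn leq leqnn (fun x y => leq_addr y x)).
by rewrite sum1_card card_ord.
Qed.


Definition Pb (S : {set 'I_m.+2}) := (sumS l S < sumS l (~: S)) && (t \in S).
Definition pn (A : {set 'I_m.+2}) := (\sum_(i in A) p i)%N.
Definition a := (\max_(S | Pb S) pn (S :\ t))%N.

Lemma Pb_t : Pb [set t].
Proof.
rewrite /Pb set11 andbT /sumS big_set1.
have -> : \sum_(i in ~: [set t]) l i = \sum_(j | j != t) l j.
  by apply: eq_bigl => j; rewrite !inE.
by case: Hl => _ [_ H]; apply: H; rewrite /is_top /=.
Qed.

Lemma a_attained : exists2 S, Pb S & a = pn (S :\ t).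
Proof.
have : (0 < #|Pb|)%N by apply/card_gt0P; exists [set t]; exact: Pb_t.
by case/(eq_bigmax_cond (fun S => pn (S :\ t))) => S PS E; exists S.
Qed.

Lemma a_ge (S : {set 'I_m.+2}) : Pb S -> (pn (S :\ t) <= a)%N.
Proof. by move=> PS; apply: (@leq_bigmax_cond _ Pb (fun S => pn (S :\ t))). Qed.

Definition qq i := minn (p i) a.+1.
Definition Q := (\sum_(j | j != t) qq j)%N.
Definition q i := if i == t then (Q - a.*2.+1)%N else qq i.

Lemma short_top (S : {set 'I_m.+2}) : t \in S -> short l S <-> Pb S.
Proof. by move=> tS; rewrite /Pb tS andbT. Qed.

Lemma sumS_t (S : {set 'I_m.+2}) : t \in S -> sumS l S = l t + sumS l (S :\ t).
Proof. by move=> tS; rewrite /sumS sumD1. Qed.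

Lemma key_short (S : {set 'I_m.+2}) : t \in S -> (short l S <-> (\sum_(i in S :\ t) qq i <= a)%N).
Proof.
move=> tS; split.
  move=> sh; apply: leq_trans (a_ge ((short_top tS).1 sh)).
  by apply: leq_sum => i _; rewrite /qq geq_minl.
move=> Hx.
have pa : forall i, i \in S :\ t -> (p i <= a)%N.
  move=> i iS; have := leq_trans (termN qq iS) Hx; rewrite /qq; lia.
have Ex : (\sum_(i in S :\ t) qq i = pn (S :\ t))%N.
  by apply: eq_bigr => i iS; rewrite /qq; apply/minn_idPl; apply: leqW; apply: pa.
rewrite Ex in Hx.
have [S' PS' aE] := a_attained.
rewrite /short; apply/negPn/negP => /negP nsh.
have g1 := gap' nsh; have g2 := gap ((short_top (proj2 (andP PS'))).2 PS').
rewrite (sumS_t tS) in g1; rewrite (sumS_t (proj2 (andP PS'))) in g2.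
have d : sumS l (S' :\ t) + delta <= sumS l (S :\ t) by lra.
have kd : K%:R * (sumS l (S' :\ t) + delta) <= K%:R * sumS l (S :\ t).
  by apply: ler_wpM2l.
rewrite mulrDr in kd.
have h1 := psum_lo (fun i => i \in S :\ t).
have h2 := psum_hi (fun i => i \in S' :\ t).
have Kb := K_big.
have : (pn (S :\ t))%:R <= (pn (S' :\ t))%:R :> R by rewrite ler_nat -aE.
rewrite /pn /sumS in h1 h2 kd *.
move: h1 h2 kd Kb; rewrite -!/(sumS _ _) => h1 h2 kd Kb.
have dpos := delta_gt0.
have e2 : (2 * m.+2 + 1)%:R = 2 * (m.+2)%:R + 1 :> R by rewrite natrD natrM.
have m0 : 0 <= (m.+2)%:R :> R by []. lra.
Qed.


Lemma pn_term (A : {set 'I_m.+2}) i : i \in A -> (p i <= pn A)%N.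
Proof. exact: termN. Qed.

Lemma K1 : (a.*2.+1 <= \sum_(j : 'I_m.+2 | (j < m)%N) qq j)%N.
Proof.
have [S' PS' aE] := a_attained.
have tS' := proj2 (andP PS').
have pa : forall i, i \in S' :\ t -> (p i <= a)%N by move=> i iA; rewrite aE; exact: pn_term.
have EA : (\sum_(i in S' :\ t) qq i = a)%N.
  rewrite aE; apply: eq_bigr => i iA; rewrite /qq; apply/minn_idPl.
  by apply: leqW; apply: pa.
case: (boolP [exists j : 'I_m.+2, (j < m)%N && (a.+1 < p j)%N]).
  case/existsP => j /andP [jm pj].
  have js : (j <= s)%N by rewrite (_ : nat_of_ord s = m) ?val_s //; lia.
  have sA : s \notin S' :\ t.
    apply/negP => /pa psa; have := p_mono js; lia.
  have jA : j \notin S' :\ t by apply/negP => /pa; lia.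
  have qj : qq j = a.+1 by rewrite /qq; apply/minn_idPr; lia.
  have sub : forall i, i \in j |: (S' :\ t) -> (i < m)%N.
    move=> i; rewrite in_setU1 => /orP [/eqP -> //|iA].
    rewrite -predlt; apply/andP; split.
      by move: iA; rewrite !inE => /andP [].
    by apply/negP => /eqP isx; move: sA; rewrite -isx iA.
  apply: leq_trans (_ : (\sum_(i in j |: (S' :\ t)) qq i <= _)%N).
    by rewrite big_setU1 //= qj EA; lia.
  exact: (@sub_le_big _ addn leq leqnn (fun x y => leq_addr y x)).
move/existsPn => nj.
have Eq : (\sum_(j : 'I_m.+2 | (j < m)%N) qq j = \sum_(j : 'I_m.+2 | (j < m)%N) p j)%N.
  apply: eq_bigr => j jm; rewrite /qq; apply/minn_idPl.
  by have := nj j; rewrite jm /=; lia.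
rewrite Eq.
have g2 := gap ((short_top tS').2 PS').
rewrite (sumS_t tS') /Sig decR in g2.
have lst : l s <= l t by apply: lmono; rewrite (_ : nat_of_ord s = m) ?val_s //=.
have d : 2 * sumS l (S' :\ t) + delta <= \sum_(j : 'I_m.+2 | (j < m)%N) l j by lra.
have kd : K%:R * (2 * sumS l (S' :\ t) + delta) <= K%:R * \sum_(j : 'I_m.+2 | (j < m)%N) l j.
  by apply: ler_wpM2l.
rewrite mulrDr in kd.
have h1 := psum_lo (fun j : 'I_m.+2 => (j < m)%N).
have h2 := psum_hi (fun i => i \in S' :\ t).
have Kb := K_big.
have e2 : (2 * m.+2 + 1)%:R = 2 * (m.+2)%:R + 1 :> R by rewrite natrD natrM.
have ea : (a.*2.+1)%:R = 2 * a%:R + 1 :> R by rewrite -addn1 -mul2n natrD natrM.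
have ea' : a%:R = (\sum_(i in S' :\ t) p i)%:R :> R by rewrite aE.
rewrite -/(sumS l _) in h2.
suff : (a.*2.+1)%:R < (\sum_(j : 'I_m.+2 | (j < m)%N) p j)%:R :> R.
  by rewrite ltr_nat => /ltnW.
have dpos := delta_gt0.
have : K%:R * (2 * sumS l (S' :\ t)) = 2 * (K%:R * sumS l (S' :\ t)) by ring.
lra.
Qed.


Lemma Q_split : Q = (qq s + \sum_(j : 'I_m.+2 | (j < m)%N) qq j)%N.
Proof. exact: decN'. Qed.

Lemma Q_big : (a.*2.+1 + qq s <= Q)%N.
Proof. rewrite Q_split; have := K1; lia. Qed.

Lemma qt : q t = (Q - a.*2.+1)%N.
Proof. by rewrite /q eqxx. Qed.

Lemma qnt i : i != t -> q i = qq i.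
Proof. by rewrite /q => /negbTE ->. Qed.

Lemma sum_q_all : (\sum_i q i = q t + Q)%N.
Proof.
rewrite (bigD1 t) //=; congr (_ + _)%N; apply: eq_bigr => i it; exact: qnt.
Qed.

Lemma sum_q_S (S : {set 'I_m.+2}) : t \in S ->
  (\sum_(i in S) q i = q t + \sum_(i in S :\ t) qq i)%N.
Proof.
move=> tS; rewrite sumD1N //; congr (_ + _)%N; apply: eq_bigr => i.
by rewrite !inE => /andP [it _]; exact: qnt.
Qed.

Definition l0 (i : 'I_m.+2) : R := (q i)%:R.

Lemma sumS_l0 S : sumS l0 S = (\sum_(i in S) q i)%:R.
Proof. by rewrite /sumS natr_sum. Qed.

Lemma part1_main : exists l0 : 'I_m.+2 -> R,
  [/\ is_length_vector l0, generic l0, integer_entries l0, top_ineq l0 & equivalent l l0].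
Proof.
have QB := Q_big.
have QS := Q_split.
have qqs : (1 <= qq s)%N by rewrite /qq; have := p_ge1 s; lia.
exists l0; split.
- split; [|split].
  + move=> i; rewrite /l0 ltr0n /q; case: eqP => _; first lia.
    by rewrite /qq; have := p_ge1 i; lia.
  + move=> i j ij; rewrite /l0 ler_nat.
    have [jt|jt] := eqVneq j t.
      rewrite jt qt; have [it|it] := eqVneq i t; first by rewrite it qt.
      rewrite qnt //; have := p_mono (le_s it); move: QB; rewrite /qq; lia.
    have it : i != t.
      apply/negP => /eqP it; move: ij jt; rewrite it.
      by case: j => k hk /= ? /negP; apply; rewrite -val_eqE /=; apply/eqP; lia.
    rewrite !qnt //; have := p_mono ij; rewrite /qq; lia.
  + move=> i; rewrite /is_top /= => /eqP vi.
    have -> : i = t by apply: val_inj.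
    have -> : \sum_(j | j != t) l0 j = Q%:R.
      by rewrite /Q natr_sum; apply: eq_bigr => j jt; rewrite /l0 qnt.
    by rewrite /l0 ltr_nat qt; lia.
- move=> S; rewrite !sumS_l0 eqr_nat; apply/eqP => E.
  have : (\sum_(i in S) q i + \sum_(i in ~: S) q i = \sum_i q i)%N.
    rewrite [RHS](bigID (fun i => i \in S)) /=; congr (_ + _)%N.
    by apply: eq_bigl => i; rewrite inE.
  rewrite sum_q_all qt E; lia.
- by exists q.
- rewrite /top_ineq /=.
  have -> : \sum_(i : 'I_m.+2 | (m <= i)%N) l0 i = (q t + q s)%:R.
    rewrite (bigD1 t) /= ?leqnSn // (bigD1 s) /=; last first.
      by rewrite s_ne_t andbT (_ : nat_of_ord s = m) ?val_s.
    rewrite big_pred0; last first.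
      move=> i; apply/negP => /andP [/andP [mi it] isx].
      by move: (predlt i); rewrite it isx /= => /esym; lia.
    by rewrite addr0 natrD.
  have -> : \sum_(i : 'I_m.+2 | (i < m)%N) l0 i = (\sum_(i : 'I_m.+2 | (i < m)%N) qq i)%:R.
    rewrite natr_sum; apply: eq_bigr => i im; rewrite /l0 qnt //.
    by move: (predlt i); rewrite im => /andP [].
  rewrite (_ : (1 : R) = 1%:R) // -natrD ler_nat qt (qnt s_ne_t).
  have : (qq s <= a.+1)%N by rewrite /qq geq_minr.
  lia.
- apply: equiv_of_short => S ct.
  have tS : t \in S.
    case: ct => i iS; rewrite /is_top /= => /eqP vi.
    by have <- : i = t by apply: val_inj.
  rewrite (key_short tS) shortE sumS_l0.
  have -> : \sum_i l0 i = (\sum_i q i)%:R by rewrite natr_sum.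
  rewrite -natrM ltr_nat sum_q_all sum_q_S // qt.
  split => ?; lia.
Qed.

End Part1.

End P1.

Module P2.
Section Part2.
Variables (R : realType) (m : nat) (l : 'I_m.+2 -> R).

Let h := (\sum_j l j + 1) / 2.

Lemma ext_val (x : 'I_m.+3) : ext_vec l x =
  if val x == m.+2 then h else if val x == m.+1 then h - l ord_max else l (inord x).
Proof.
rewrite /ext_vec /=.
case: insubP => [j _ vj|]; last by rewrite ltnSn.
have -> : j = ord_max by apply: val_inj.
case: eqP => [//|ne2]; case: eqP => [//|ne1].
case: insubP => [k _ vk|]; last first.
  by have := ltn_ord x; rewrite ltnS leq_eqVlt => /orP [/eqP//|->].
congr (l _); apply: val_inj => /=; rewrite inordK -vk //; exact: ltn_ord. Qed.

Definition e (i : 'I_m.+2) : 'I_m.+3 :=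
  if i == ord_max then ord_max else widen_ord (leqnSn _) i.
Definition g (x : 'I_m.+3) : 'I_m.+2 := inord (if val x == m.+2 then m.+1 else val x).

Lemma val_e i : val (e i) = if val i == m.+1 then m.+2 else val i.
Proof.
rewrite /e; case: eqP => [->|ne] /=; first by rewrite eqxx.
case: eqP => // vi; exfalso; apply: ne; exact: val_inj.
Qed.

Lemma H1e i j : (e i <= e j)%N = (i <= j)%N.
Proof.
rewrite !val_e; have := ltn_ord i; have := ltn_ord j.
by do 2 case: eqP => /= ?; move=> *; apply/idP/idP => ?; lia.
Qed.

Lemma H2e : cancel e g.
Proof.
move=> i; apply: val_inj; rewrite /g val_e.
have := ltn_ord i; have [vi|vi] := eqVneq (val i) m.+1 => ? /=.
  by rewrite eqxx inordK // vi.
case: eqP => ?; first lia.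
by rewrite inordK.
Qed.

Lemma H3e i : is_top (e i) = is_top i.
Proof.
rewrite /is_top val_e; case: i => k hk /=.
have [vi|vi] := eqVneq k m.+1; first by rewrite !eqxx.
by apply/negbTE/eqP; lia.
Qed.

Lemma H6e i : ~~ is_top i -> val (e i) = val i.
Proof. by rewrite /is_top /= val_e => /negbTE ->. Qed.

Let t : 'I_m.+2 := ord_max.
Let W := \sum_(i < m.+1) l (widen_ord (leqnSn _) i).

Lemma sum_l : \sum_i l i = W + l t.
Proof. by rewrite big_ord_recr. Qed.

Lemma lp_small (i : 'I_m.+1) : ext_vec l (widen_ord (leqnSn _) (widen_ord (leqnSn _) i)) = l (widen_ord (leqnSn _) i).
Proof.
rewrite ext_val; case: i => k hk /=; case: eqP => ?; first lia.
case: eqP => ?; first lia.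
by congr (l _); apply: val_inj; rewrite /= inordK //; lia.
Qed.

Lemma sum_lp : \sum_x ext_vec l x = W + (h - l t) + h.
Proof.
rewrite big_ord_recr big_ord_recr /= /W; congr (_ + _ + _).
- by apply: eq_bigr => i _; rewrite lp_small.
- by rewrite ext_val /= eqxx; case: eqP => // ?; lia.
- by rewrite ext_val /= eqxx.
Qed.

Lemma ct_top (S : {set 'I_m.+2}) : contains_top S -> t \in S.
Proof.
case=> i iS; rewrite /is_top /= => /eqP vi.
by have -> : t = i by apply: val_inj; rewrite /= vi.
Qed.

Lemma H4e (S : {set 'I_m.+2}) :
  contains_top S -> (short l S <-> short (ext_vec l) (e @: S)).
Proof.
move=> /ct_top tS; rewrite !shortE sum_l sum_lp.
have e1 : sumS l S = l t + sumS l (S :\ t) by rewrite /sumS (big_setD1 t).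
have e2 : sumS (ext_vec l) (e @: S) = h + sumS l (S :\ t).
  rewrite /sumS big_imset /=; last by move=> x y _ _; exact: (can_inj H2e).
  rewrite (big_setD1 t) //=; congr (_ + _).
    by rewrite ext_val val_e /= !eqxx.
  apply: eq_bigr => -[k hk]; rewrite !inE => /andP [it _].
  have vi : k != m.+1.
    by apply: contra it => /eqP vi; apply/eqP/val_inj; rewrite /= vi.
  rewrite ext_val !val_e /= !(negbTE vi); case: eqP => ?; first lia.
  by congr (l _); apply: val_inj; rewrite /= inordK.
rewrite e1 e2; split => ?; lra.
Qed.

Hypothesis Hl : is_length_vector l.

Lemma W_gt : l t < W.
Proof.
case: Hl => _ [_ Ht]; have := Ht t; rewrite /is_top /= eqxx => /(_ isT).
have : \sum_i l i = l t + \sum_(j | j != t) l j by rewrite (bigD1 t).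
rewrite sum_l => ? ?; lra.
Qed.

Lemma lp_ge0 x : 0 <= ext_vec l x.
Proof.
have Hsum : 0 <= W.
  by apply: sumr_ge0 => i _; case: Hl => Hp _; apply: ltW.
have Wt := W_gt.
have ht : 0 <= h - l t by rewrite /h sum_l; lra.
have lt0 : 0 < l t by case: Hl.
rewrite ext_val; case: eqP => _; first by rewrite /h sum_l; lra.
case: eqP => _; first lra.
by case: Hl => Hp _; apply: ltW.
Qed.

Lemma H5e (T : {set 'I_m.+3}) : contains_top T -> short (ext_vec l) T ->
  forall x, x \in T -> e (g x) = x.
Proof.
case=> y yT; rewrite /is_top /= => /eqP vy.
have yo : y = ord_max by apply: val_inj.
rewrite yo in yT; move=> + x xT.
have [vx|vx] := eqVneq (val x) m.+1.
  rewrite shortE => sh; exfalso; move: sh; apply/negP; rewrite -leNgt.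
  have xo : x \in T :\ ord_max.
    by rewrite !inE xT andbT; apply/eqP => /(congr1 val); rewrite vx /=; lia.
  rewrite /sumS (big_setD1 ord_max) // (big_setD1 x) //=.
  have r0 : 0 <= \sum_(i in T :\ ord_max :\ x) ext_vec l i.
    by apply: sumr_ge0 => i _; apply: lp_ge0.
  have -> : ext_vec l ord_max = h by rewrite ext_val /= eqxx.
  have -> : ext_vec l x = h - l t.
    by rewrite ext_val vx /=; case: eqP => [?|_]; [lia | rewrite eqxx].
  rewrite sum_lp; have := W_gt; rewrite /h sum_l; lra.
move=> _; apply: val_inj; rewrite val_e /g.
move: x xT vx => [k hk] xT /= vx.
have [->|ne] := eqVneq k m.+2.
  by rewrite inordK // eqxx.
rewrite inordK; last lia.
by rewrite (negbTE vx).
Qed.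

Lemma part2 (A : pred nat) : gee l A <-> gee (ext_vec l) A.
Proof.
exact: (gee_e H1e H2e H3e H4e H5e H6e).
Qed.

End Part2.

End P2.

Theorem proposition3p1 (R : realType) (n : nat) :
  (forall l : 'I_n -> R, is_length_vector l -> generic l ->
     exists l0 : 'I_n -> R,
       [/\ is_length_vector l0, generic l0, integer_entries l0,
           top_ineq l0 & equivalent l l0]) /\
  (forall l : 'I_n -> R,
     is_length_vector l -> generic l -> integer_entries l -> top_ineq l ->
     forall A : pred nat, gee l A <-> gee (ext_vec l) A).
Proof.
case: n => [|[|m]].
- split => l Hl Hg; exfalso; move: (Hg set0); rewrite /sumS !big1 ?eqxx //; by case.
- have E : forall l : 'I_1 -> R, \sum_(j | j != ord0) l j = 0.
    by move=> l'; apply: big1 => j; rewrite ord1 eqxx.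
  split => l [Hp [_ Ht]]; exfalso; move: (Ht ord0 isT) (Hp ord0); rewrite E => ? ?; lra.
- split; first by move=> l Hl Hg; exact: P1.part1_main.
  by move=> l Hl _ _ _ A; exact: P2.part2.
Qed.
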